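(* Let $\Sigma$ be a finite set of tokens, $c$ a context, $M_1,M_2,M_b$ language models, and $f$ a min-bounded function with constant $\lambda_f$. Let $t\in\Sigma$ be a token that is $\alpha$-exposed by $M_1$ over $M_b$ at $c$ and $\beta$-exposed by $M_2$ over $M_b$ at $c$. Let $M:=DAGG_f(M_1,M_2)$. Then $t$ is $\le\gamma\min(\alpha,\beta)$-exposed by $M$ over $M_b$ at $c$, where $\gamma=\lambda_f\,\overline{f_c}(M_1,M_2)$.
   Context: Let $n=|\Sigma|$. A context is a finite sequence of tokens from $\Sigma$. A language model $M$ assigns to every context $c$ and token $t\in\Sigma$ a probability $p_M(t\mid c)>0$, with $\sum_{t\in\Sigma}p_M(t\mid c)=1$. For $g:\Sigma\to\mathbb{R}_{>0}$, $GM(g(t)):=\exp\big(\tfrac1n\sum_{t\in\Sigma}\log g(t)\big)$. Typical probability: $tp_c(M):=GM(p_M(t\mid c))$; relative probability: $rp_M(t\mid c):=p_M(t\mid c)/tp_c(M)$. Typical probability ratio: $tpr_c(M_1,M_2):=GM\big(\tfrac{p_{M_1}(t\mid c)}{p_{M_2}(t\mid c)}\big)$. A token $t$ is $\alpha$-exposed by $M_1$ over $M_2$ at $c$ if $\frac{p_{M_1}(t\mid c)}{p_{M_2}(t\mid c)\cdot tpr_c(M_1,M_2)}=\alpha$; it is $\le\alpha$-exposed if it is $\beta$-exposed for some $\beta\le\alpha$. A function $f:\mathbb{R}_{>0}^2\to\mathbb{R}_{>0}$ is proper-avg if $\min(x,y)\le f(x,y)\le\max(x,y)$ for all $x,y>0$;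 it is min-bounded if it is proper-avg and there is a constant $\lambda_f$ with $f(x,y)\le\lambda_f\min(x,y)$ for all $x,y>0$. Set $M(t\mid c):=f(rp_{M_1}(t\mid c),rp_{M_2}(t\mid c))$; $DAGG_f(M_1,M_2)$ is the language model $M$ with $p_M(t\mid c):=\frac{M(t\mid c)}{\sum_{t'\in\Sigma}M(t'\mid c)}$. Define $\overline{f_c}(M_1,M_2):=GM\big(M(t\mid c)^{-1}\big)$. *)

(* Defs.v *)
From HB Require Import structures.
From mathcomp Require Import all_boot all_order all_algebra.
From mathcomp Require Import all_classical all_reals all_analysis.
Set Implicit Arguments. Unset Strict Implicit. Unset Printing Implicit Defensive.
Import Order.TTheory GRing.Theory Num.Theory.
Local Open Scope ring_scope.

Section Defs.
Variables (R : realType) (T : finType).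

Definition context := seq T.

Definition is_LM (p : context -> T -> R) : Prop :=
  (forall c t, 0 < p c t) /\ (forall c, \sum_(t : T) p c t = 1).

Definition GM (g : T -> R) : R :=
  expR ((#|T|%:R)^-1 * \sum_(t : T) ln (g t)).

Definition tp (p : context -> T -> R) (c : context) : R := GM (fun t => p c t).

Definition rp (p : context -> T -> R) (c : context) (t : T) : R := p c t / tp p c.

Definition tpr (p1 p2 : context -> T -> R) (c : context) : R :=
  GM (fun t => p1 c t / p2 c t).

Definition exposed (p1 p2 : context -> T -> R) (c : context) (t : T) (a : R) : Prop :=
  p1 c t / (p2 c t * tpr p1 p2 c) = a.

Definition le_exposed (p1 p2 : context -> T -> R) (c : context) (t : T) (a : R) : Prop :=
  exists b, b <= a /\ exposed p1 p2 c t b.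

Definition proper_avg (f : R -> R -> R) : Prop :=
  forall x y, 0 < x -> 0 < y -> Num.min x y <= f x y /\ f x y <= Num.max x y.

Definition min_bounded (f : R -> R -> R) (lam : R) : Prop :=
  proper_avg f /\ forall x y, 0 < x -> 0 < y -> f x y <= lam * Num.min x y.

Definition Mfun (f : R -> R -> R) (p1 p2 : context -> T -> R) (c : context) (t : T) : R :=
  f (rp p1 c t) (rp p2 c t).

Definition DAGG (f : R -> R -> R) (p1 p2 : context -> T -> R) : context -> T -> R :=
  fun c t => Mfun f p1 p2 c t / \sum_(t' : T) Mfun f p1 p2 c t'.

Definition fbar (f : R -> R -> R) (p1 p2 : context -> T -> R) (c : context) : R :=
  GM (fun t => (Mfun f p1 p2 c t)^-1).

End Defs.

(* Main.v *)
Require Import Defs.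
From mathcomp Require Import all_boot all_order all_algebra.
From mathcomp Require Import all_classical all_reals all_analysis.
From mathcomp Require Import ring.
Import Order.TTheory GRing.Theory Num.Theory.
Local Open Scope ring_scope.

Section Aux.
Variables (R : realType) (T : finType).

Lemma GM_gt0 (g : T -> R) : 0 < GM g.
Proof. exact: expR_gt0. Qed.

Lemma GMM (g h : T -> R) : (forall t, 0 < g t) -> (forall t, 0 < h t) ->
  GM (fun t => g t * h t) = GM g * GM h.
Proof.
move=> g0 h0; rewrite /GM -expRD -mulrDr -big_split /=; congr (expR (_ * _)).
by apply: eq_bigr => i _; rewrite lnM // posrE.
Qed.

Lemma GMV (g : T -> R) : (forall t, 0 < g t) ->
  GM (fun t => (g t)^-1) = (GM g)^-1.
Proof.
move=> g0; rewrite /GM -expRN; congr expR.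
rewrite -mulrN -sumrN; congr (_ * _); apply: eq_bigr => i _.
by rewrite lnV // posrE.
Qed.

Lemma GMC (k : R) : 0 < k -> (0 < #|T|)%N -> GM (fun _ : T => k) = k.
Proof.
move=> k0 n0; rewrite /GM sumr_const.
have -> : ln k *+ #|(xpredT : pred T)| = #|T|%:R * ln k by rewrite mulr_natl.
rewrite mulrA mulVf ?mul1r ?lnK ?posrE // pnatr_eq0 -lt0n //.
Qed.

Lemma min_pM (x y k : R) : 0 < k -> Num.min (x * k) (y * k) = Num.min x y * k.
Proof.
move=> k0; case: (leP x y) => h.
  by rewrite !min_l // ler_pM2r.
by rewrite !min_r ?ltW // ltr_pM2r.
Qed.

End Aux.

Theorem corollary1 (R : realType) (T : finType) (f : R -> R -> R) (lam : R)
  (p1 p2 pb : context T -> T -> R) (c : context T) (t : T) (alpha beta : R) :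
  is_LM p1 -> is_LM p2 -> is_LM pb ->
  min_bounded f lam ->
  exposed p1 pb c t alpha ->
  exposed p2 pb c t beta ->
  le_exposed (DAGG f p1 p2) pb c t (lam * fbar f p1 p2 c * Num.min alpha beta).
Proof.
move=> [P1 _] [P2 _] [Pb _] [avg mb] ea eb.
have n0 : (0 < #|T|)%N by apply/card_gt0P; exists t.
set M := Mfun f p1 p2 c.
have rp0 : forall (p : context T -> T -> R) (u : T), (forall c t, 0 < p c t) -> 0 < rp p c u.
  by move=> p u Hp; apply: divr_gt0; [exact: Hp | exact: expR_gt0].
have M0 : forall u, 0 < M u.
  move=> u; have [h _] := avg _ _ (rp0 p1 u P1) (rp0 p2 u P2).
  by apply: lt_le_trans h; rewrite lt_min !rp0.
set S := \sum_(u : T) M u.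
have S0 : 0 < S by rewrite /S (bigD1 t) //= ltr_wpDr ?M0 // sumr_ge0 // => i _; exact/ltW/M0.
have tprE : forall (p : context T -> T -> R), (forall c t, 0 < p c t) ->
    tpr p pb c = tp p c / tp pb c.
  move=> p Hp; rewrite /tpr /tp -GMV // -GMM //.
  by move=> u; rewrite invr_gt0.
have tprM : tpr (DAGG f p1 p2) pb c = GM M / S / tp pb c.
  rewrite /tpr /DAGG /tp -/M -/S.
  rewrite GMM; last by move=> u; rewrite invr_gt0.
    by rewrite GMM ?GMV ?GMC // => u; rewrite invr_gt0.
  by move=> u; rewrite divr_gt0.
exists ((M t / S) / (pb c t * tpr (DAGG f p1 p2) pb c)); split; last by [].
rewrite tprM.
have -> : fbar f p1 p2 c = (GM M)^-1 by rewrite /fbar -/M GMV.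
move: ea eb; rewrite /exposed !tprE // => <- <-.
have hm := mb _ _ (rp0 p1 t P1) (rp0 p2 t P2); rewrite -/(Mfun f p1 p2 c t) -/M in hm.
have G0 : 0 < GM M := expR_gt0 _.
have pb0 := Pb c t.
have tb0 : 0 < tp pb c := expR_gt0 _.
have t10 : 0 < tp p1 c := expR_gt0 _.
have t20 : 0 < tp p2 c := expR_gt0 _.
have q1 := P1 c t. have q2 := P2 c t.
clear tprM tprE.
move: hm G0 pb0 tb0 t10 t20 S0 q1 q2 (M0 t); rewrite /rp.
move: (tp p1 c) (tp p2 c) (tp pb c) (GM M) (M t) S => g1 g2 gb G m s.
move: (p1 c t) (p2 c t) (pb c t) => a1 a2 b hm G0 b0 gb0 g10 g20 s0 a10 a20 m0.
have -> : a1 / (b * (g1 / gb)) = a1 / g1 * (gb / b).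
  by field; rewrite ?gt_eqF.
have -> : a2 / (b * (g2 / gb)) = a2 / g2 * (gb / b).
  by field; rewrite ?gt_eqF.
rewrite min_pM ?divr_gt0 //.
have -> : m / s / (b * (G / s / gb)) = m * (G^-1 * (gb / b)).
  by field; rewrite ?gt_eqF.
have -> : lam * G^-1 * (Num.min (a1 / g1) (a2 / g2) * (gb / b))
  = lam * Num.min (a1 / g1) (a2 / g2) * (G^-1 * (gb / b)).
  by ring.
by rewrite ler_pM2r // mulr_gt0 ?invr_gt0 ?divr_gt0.
Qed.
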